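(* Let $(q_n)_{n \ge 1}$ be a sequence of positive rational numbers, and let $(p_n)_{n \ge 1}$ be a sequence of prime numbers such that, for every $n \in \mathbb{N}$, $p_n \mid \mathsf{d}(q_n)$ and $p_n \nmid \mathsf{d}(q_k)$ for every $k \neq n$. Then the Puiseux monoid $M = \langle q_n \mid n \in \mathbb{N} \rangle$ is a length-finite-factorization monoid (LFFM).
   Context: For a positive rational $r$ in lowest terms $n/d$, $\mathsf{d}(r) := d$. A Puiseux monoid is an additive submonoid of $(\mathbb{Q}_{\ge 0},+)$. An atom of $M$ is a nonzero element $a$ such that $a=x+y$ with $x,y\in M$ forces $x=0$ or $y=0$; $M$ is atomic if each element is a finite sum of atoms. For nonzero $x \in M$, a factorization of $x$ is a formal (unordered) sum $a_1+\dots+a_\ell$ of atoms whose value is $x$, of length $\ell$; $\mathsf{Z}(x,\ell)$ denotes the set of factorizations of $x$ of length $\ell$. $M$ is an LFFM if $M$ is atomic and $\mathsf{Z}(x,\ell)$ is finite for every nonzero $x \in M$ and every $\ell \in \mathbb{N}$. *)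

(* Defs.v *)
From mathcomp Require Import all_boot all_order all_algebra.
Set Implicit Arguments. Unset Strict Implicit. Unset Printing Implicit Defensive.
Import Order.TTheory GRing.Theory Num.Theory.
Local Open Scope ring_scope.

Definition dnm (r : rat) : nat := `|denq r|%N.

Definition gen_monoid (q : nat -> rat) (x : rat) : Prop :=
  exists s : seq nat, x = \sum_(i <- s) q i.

Definition is_atom (M : rat -> Prop) (a : rat) : Prop :=
  M a /\ a != 0 /\
  forall x y, M x -> M y -> a = x + y -> x = 0 \/ y = 0.

Definition atomic (M : rat -> Prop) : Prop :=
  forall x, M x -> x != 0 ->
    exists s : seq rat, (forall a, a \in s -> is_atom M a) /\ x = \sum_(a <- s) a.

(* A factorization of x of length l, represented by a list of atoms;
   two lists represent the same (unordered) factorization iff they are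
   permutations of each other. *)
Definition is_factorization (M : rat -> Prop) (x : rat) (l : nat) (s : seq rat) : Prop :=
  (forall a, a \in s -> is_atom M a) /\ size s = l /\ \sum_(a <- s) a = x.

Definition Zfinite (M : rat -> Prop) (x : rat) (l : nat) : Prop :=
  exists L : seq (seq rat),
    forall s, is_factorization M x l s -> exists2 t, t \in L & perm_eq s t.

Definition LFFM (M : rat -> Prop) : Prop :=
  atomic M /\ forall x l, M x -> x != 0 -> Zfinite M x l.

(* Main.v *)
Require Import Defs.
From mathcomp Require Import all_boot all_order all_algebra.
From mathcomp Require Import ring lra.
From Stdlib Require Import Classical.
Import Order.TTheory GRing.Theory Num.Theory.
Local Open Scope ring_scope.

Definition pint (p : nat) (r : rat) : Prop :=
  exists (u : int) (v : nat), ~~ (p %| v)%N /\ r * v%:R = u%:~R.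

Lemma pintD p r1 r2 : prime p -> pint p r1 -> pint p r2 -> pint p (r1 + r2).
Proof.
move=> pp [u1 [v1 [h1 e1]]] [u2 [v2 [h2 e2]]].
exists (u1 * v2%:Z + u2 * v1%:Z), (v1 * v2)%N; split.
  by rewrite Euclid_dvdM // negb_or h1 h2.
rewrite natrM rmorphD !rmorphM /= -e1 -e2 !pmulrn.
by rewrite -!pmulrn; ring.
Qed.

Lemma pintN p r : pint p r -> pint p (- r).
Proof.
move=> [u [v [h e]]]; exists (- u), v; split=> //.
by rewrite mulNr e rmorphN.
Qed.

Lemma pint_int p (z : int) : prime p -> pint p z%:~R.
Proof.
move=> pp; exists z, 1%N; split; first by rewrite dvdn1; apply/eqP => e1; move: pp; rewrite e1.
by rewrite mulr1.
Qed.

Lemma pint_ndvd p r : ~~ (p %| dnm r)%N -> pint p r.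
Proof.
move=> h; exists (numq r), (dnm r); split=> //.
rewrite numqE /dnm; congr (_ * _).
have := denq_gt0 r; case: (denq r) => // n _.
Qed.

Lemma pint_mul p r (c : nat) : prime p -> (p %| dnm r)%N ->
  pint p (c%:R * r) -> (p %| c)%N.
Proof.
move=> pp hd [u [v [h e]]].
have e2 : (c%:Z * numq r * v%:Z) = u * denq r.
  apply: (@intr_inj rat).
  rewrite !rmorphM /= numqE -e.
  rewrite -!pmulrn; ring.
have : (p %| absz (c%:Z * numq r * v%:Z)%R)%N.
  by rewrite e2 abszM dvdn_mull.
rewrite !abszM Euclid_dvdM // Euclid_dvdM // (negbTE h) orbF.
case/orP => // hn.
have := coprime_num_den r; rewrite /coprime => /eqP hg.
have : (p %| gcdn `|numq r| `|denq r|)%N by rewrite dvdn_gcd hn.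
by rewrite hg dvdn1 => /eqP ep; move: pp; rewrite ep.
Qed.

Section Main.
Variables (q : nat -> rat) (p : nat -> nat).
Hypotheses (hq : forall n, 0 < q n) (hp : forall n, prime (p n))
  (hdiv : forall n, (p n %| dnm (q n))%N)
  (hndiv : forall n k, k != n -> ~~ (p n %| dnm (q k))%N).

Lemma sum_ge0 (t : seq nat) : 0 <= \sum_(i <- t) q i.
Proof.
elim: t => [|i t IH]; first by rewrite big_nil.
by rewrite big_cons addr_ge0 // ltW.
Qed.

Lemma sum_ge n (t : seq nat) : n \in t -> q n <= \sum_(i <- t) q i.
Proof.
elim: t => [|i t IH] //; rewrite in_cons big_cons => /orP [/eqP ->|/IH h].
  by rewrite lerDl sum_ge0.
by rewrite (le_trans h) // lerDr ltW.
Qed.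

Lemma decomp n (t : seq nat) :
  pint (p n) (\sum_(i <- t) q i - (count_mem n t)%:R * q n).
Proof.
elim: t => [|i t IH].
  by rewrite big_nil /= mul0r subr0; have := @pint_int (p n) 0 (hp n); rewrite mulr0z.
rewrite big_cons /=; case: (eqVneq i n) => [->|hin].
  rewrite add1n mulrSr; move: IH.
  have -> : q n + \sum_(j <- t) q j - ((count_mem n t)%:R + 1) * q n
     = \sum_(j <- t) q j - (count_mem n t)%:R * q n by ring.
  by [].
have -> : (false + count_mem n t)%N = count_mem n t by [].
rewrite -addrA; apply: pintD => //.
apply: pint_ndvd; exact: hndiv.
Qed.

Lemma atom_gen a : is_atom (gen_monoid q) a -> exists n, a = q n.
Proof.
move=> [[s ->] [nz h]].
case: s nz h => [|i s]; first by rewrite big_nil eqxx.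
move=> _ h; exists i.
have m1 : gen_monoid q (q i) by exists [:: i]; rewrite big_seq1.
have m2 : gen_monoid q (\sum_(j <- s) q j) by exists s.
have [e|e] := h (q i) (\sum_(j <- s) q j) m1 m2 (big_cons _ _ _ _ _ _).
- by move: (hq i); rewrite e ltxx.
- by rewrite big_cons e addr0.
Qed.

Lemma gen_atom n : is_atom (gen_monoid q) (q n).
Proof.
split; first by exists [:: n]; rewrite big_seq1.
split; first by rewrite gt_eqF.
move=> x y [s1 ->] [s2 ->] e.
case: (boolP (n \in s1)) => h1.
  right; apply/eqP; rewrite eq_le sum_ge0 andbT.
  have := @sum_ge n s1 h1; rewrite e; have := sum_ge0 s2; lra.
case: (boolP (n \in s2)) => h2.
  left; apply/eqP; rewrite eq_le sum_ge0 andbT.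
  have := @sum_ge n s2 h2; rewrite e; have := sum_ge0 s1; lra.
exfalso.
have := decomp n (s1 ++ s2).
rewrite big_cat /= -e count_cat.
have -> : count_mem n s1 = 0%N by apply/count_memPn.
have -> : count_mem n s2 = 0%N by apply/count_memPn.
rewrite mul0r subr0.
have -> : q n = 1%:R * q n by rewrite mul1r.
move/(@pint_mul (p n) (q n) 1 (hp n) (hdiv n)).
by rewrite dvdn1 => /eqP e1; move: (hp n); rewrite e1.
Qed.

Lemma p_inj n k : p n = p k -> n = k.
Proof.
move=> e; apply/eqP; apply: contraT => hk.
have := hndiv n k; rewrite eq_sym => /(_ hk).
by rewrite e hdiv.
Qed.

Lemma finite_idx (B : nat) : exists N : seq nat, forall n, (p n <= B)%N -> n \in N.
Proof.
elim: B => [|B [N HN]].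
  exists [::] => n; rewrite leqn0 => /eqP e; move: (hp n); rewrite e.
  done.
case: (classic (exists n, p n = B.+1)) => [[n0 e0]|ne].
  exists (n0 :: N) => n; rewrite leq_eqVlt => /orP [/eqP e|h].
    by rewrite (@p_inj n n0 (etrans e (esym e0))) mem_head.
  by rewrite in_cons HN ?orbT.
exists N => n; rewrite leq_eqVlt => /orP [/eqP e|h].
  by exfalso; apply: ne; exists n.
exact: HN.
Qed.

Fixpoint lists (A : seq rat) (l : nat) : seq (seq rat) :=
  if l is l'.+1 then [seq a :: t | a <- A, t <- lists A l'] else [:: [::]].

Lemma lists_mem (A : seq rat) (s : seq rat) :
  (forall a, a \in s -> a \in A) -> s \in lists A (size s).
Proof.
elim: s => [|a s IH] h /=; first by rewrite mem_seq1.
apply: allpairs_f; first by apply: h; rewrite mem_head.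
by apply: IH => b hb; apply: h; rewrite in_cons hb orbT.
Qed.

Lemma atoms_idx (s : seq rat) : (forall a, a \in s -> is_atom (gen_monoid q) a) ->
  exists t : seq nat, s = map q t.
Proof.
elim: s => [|a s IH] h; first by exists [::].
have [n ->] := @atom_gen a (h a (mem_head _ _)).
have [t ->] : exists t, s = map q t.
  by apply: IH => b hb; apply: h; rewrite in_cons hb orbT.
by exists (n :: t).
Qed.

End Main.

Theorem proposition4p10 (q : nat -> rat) (p : nat -> nat)
  (hq : forall n, 0 < q n)
  (hp : forall n, prime (p n))
  (hdiv : forall n, (p n %| dnm (q n))%N)
  (hndiv : forall n k, k != n -> ~~ (p n %| dnm (q k))%N) :
  LFFM (gen_monoid q).
Proof.
split.
  move=> x [s ->] _; exists (map q s); split; last by rewrite big_map.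
  by move=> a /mapP [n _ ->]; exact: (@gen_atom q p hq hp hdiv hndiv).
move=> x l _ _.
have [N HN] := @finite_idx q p hp hdiv hndiv (l + dnm x)%N.
exists (lists (map q N) l) => s [ha [hs hsum]].
exists s => //.
have [t et] := @atoms_idx q hq s ha.
rewrite -hs; apply: lists_mem => a; rewrite et => /mapP [n hn ->].
apply: map_f; apply: HN.
case: (boolP (p n %| dnm x)%N) => hx.
  apply: leq_trans (leq_addl _ _).
  apply: dvdn_leq hx.
  by rewrite /dnm absz_gt0 gt_eqF // denq_gt0.
have hpx := @pint_ndvd (p n) x hx.
have := @decomp q p hp hndiv n t.
have e1 : \sum_(i <- t) q i = x by rewrite -hsum et big_map.
rewrite e1 => hd.
have : pint (p n) ((count_mem n t)%:R * q n).
  have -> : (count_mem n t)%:R * q n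
     = x + - (x - (count_mem n t)%:R * q n) by ring.
  by apply: pintD => //; apply: pintN.
move/(@pint_mul (p n) (q n) _ (hp n) (hdiv n)) => hc.
apply: leq_trans (leq_addr _ _).
apply: leq_trans (dvdn_leq _ hc) _.
  by rewrite -has_count has_pred1.
by rewrite -hs et size_map count_size.
Qed.
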